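(* Let $l,p,r>1$ be integers, $n=lpr$, and $A\in\{0,1\}^{n\times n}$. Then $A$ admits both an $(l,pr)$ factorization and a $(pl,r)$ factorization if and only if $A$ admits an $(l,p,r)$ factorization.
   Context: Binary matrices have entries in $\{0,1\}$; Kronecker products use Boolean arithmetic ($1+1=1$). For positive integers $n_1,\dots,n_m$ with $\prod n_i=n$, an $(n_1,\dots,n_m)$ factorization of $A\in\{0,1\}^{n\times n}$ is an expression $A=A_1\otimes\cdots\otimes A_m$ with $A_i\in\{0,1\}^{n_i\times n_i}$. *)

(* Defs.v *)
From mathcomp Require Import all_boot all_algebra.
Set Implicit Arguments. Unset Strict Implicit. Unset Printing Implicit Defensive.

(* entry of a square binary matrix at natural indices (false out of range) *)
Definition entry (m : nat) (A : 'M[bool]_m) (i j : nat) : bool :=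
  match @insub _ (fun k => k < m) 'I_m i, @insub _ (fun k => k < m) 'I_m j with
  | Some i', Some j' => A i' j'
  | _, _ => false
  end.

(* Kronecker product A (x) B with A : n1 x n1, B : n2 x n2, viewed as an
   n x n matrix (meaningful when n = n1 * n2):
   (A (x) B)_{i1*n2+i2, j1*n2+j2} = A_{i1 j1} && B_{i2 j2}.
   Only products (no sums) occur, so Boolean arithmetic is just && . *)
Definition kron (n n1 n2 : nat) (A : 'M[bool]_n1) (B : 'M[bool]_n2) : 'M[bool]_n :=
  \matrix_(i, j) (entry A (i %/ n2) (j %/ n2) && entry B (i %% n2) (j %% n2)).

Definition fact2 (n : nat) (n1 n2 : nat) (A : 'M[bool]_n) : Prop :=
  n1 * n2 = n /\
  exists (A1 : 'M[bool]_n1) (A2 : 'M[bool]_n2), A = kron n A1 A2.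

Definition fact3 (n : nat) (n1 n2 n3 : nat) (A : 'M[bool]_n) : Prop :=
  n1 * n2 * n3 = n /\
  exists (A1 : 'M[bool]_n1) (A2 : 'M[bool]_n2) (A3 : 'M[bool]_n3),
    A = kron n A1 (kron (n2 * n3) A2 A3).

(* Main.v *)
Require Import Defs.
From mathcomp Require Import all_boot all_algebra zify.
Set Implicit Arguments. Unset Strict Implicit.

Lemma entry_out m (A : 'M[bool]_m) i j : ~~ (i < m) || ~~ (j < m) -> entry A i j = false.
Proof.
rewrite /entry; case: insubP => [i' Hi _|//]; case: insubP => [j' Hj _|//].
by rewrite Hi Hj.
Qed.

Lemma entry_ord m (A : 'M[bool]_m) (i j : 'I_m) : entry A i j = A i j.
Proof.
rewrite /entry; case: insubP => [i' _ /val_inj ->|]; last by rewrite ltn_ord.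
by case: insubP => [j' _ /val_inj ->|]; last by rewrite ltn_ord.
Qed.

Lemma entry_inj m (A B : 'M[bool]_m) :
  (forall i j : nat, entry A i j = entry B i j) -> A = B.
Proof. by move=> H; apply/matrixP => i j; rewrite -!entry_ord H. Qed.

Lemma entry_mx m (F : nat -> nat -> bool) x y :
  entry (\matrix_(i < m, j < m) F (nat_of_ord i) (nat_of_ord j)) x y = [&& x < m, y < m & F x y].
Proof.
case: (ltnP x m) => Hx; case: (ltnP y m) => Hy /=.
- by rewrite (entry_ord _ (Ordinal Hx) (Ordinal Hy)) mxE.
all: by rewrite entry_out // -!leqNgt ?Hx ?Hy ?orbT.
Qed.

Lemma entry_kron n n1 n2 (A : 'M[bool]_n1) (B : 'M[bool]_n2) i j :
  n1 * n2 = n ->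
  entry (kron n A B) i j = entry A (i %/ n2) (j %/ n2) && entry B (i %% n2) (j %% n2).
Proof.
move=> Hn.
case: (ltnP i n) => Hi; case: (ltnP j n) => Hj.
- by rewrite (entry_ord _ (Ordinal Hi) (Ordinal Hj)) mxE.
all: rewrite entry_out; last by rewrite -!leqNgt ?Hi ?Hj ?orbT.
all: case: n2 B Hn => [|n2] B Hn; first by rewrite [entry B _ _]entry_out ?andbF.
all: rewrite [entry A _ _]entry_out // !ltn_divLR // Hn -!leqNgt ?Hi ?Hj ?orbT //.
Qed.

Theorem lemma5 (l p r : nat) (hl : 1 < l) (hp : 1 < p) (hr : 1 < r)
    (A : 'M[bool]_(l * p * r)) :
  (fact2 l (p * r) A /\ fact2 (p * l) r A) <-> fact3 l p r A.
Proof.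
have hr0 : 0 < r by lia.
have hpr0 : 0 < p * r by rewrite muln_gt0; lia.
split.
- move=> [[_ [B1 [B2 HB]]] [_ [C1 [C2 HC]]]]; split => //.
  case: (pickP (fun ab : 'I_l * 'I_l => B1 ab.1 ab.2)) => [[a b] /= Hab | H0].
  + set D : 'M[bool]_p := (\matrix_(x, y) entry C1 (a * p + x) (b * p + y))%R.
    exists B1, D, C2; rewrite HB; congr kron; apply: entry_inj => x y.
    rewrite entry_kron // /D (@entry_mx p (fun x y => entry C1 (a * p + x) (b * p + y))).
    case: (ltnP x (p * r)) => Hx; last first.
      have Hx' : (x %/ r < p) = false by rewrite ltn_divLR // ltnNge Hx.
      by rewrite Hx' entry_out // -leqNgt Hx.
    case: (ltnP y (p * r)) => Hy; last first.
      have Hy' : (y %/ r < p) = false by rewrite ltn_divLR // ltnNge Hy.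
      by rewrite Hy' andbF entry_out //; apply/orP; right; rewrite -leqNgt.
    have E := congr1 (fun M => entry M (a * (p * r) + x) (b * (p * r) + y)) (etrans (esym HB) HC).
    move: E => /=; rewrite !entry_kron; try lia.
    have K c k : k < p * r -> [/\ (c * (p * r) + k) %/ (p * r) = c, (c * (p * r) + k) %% (p * r) = k,
       (c * (p * r) + k) %/ r = c * p + k %/ r & (c * (p * r) + k) %% r = k %% r].
      move=> Hk; split.
      - by rewrite divnMDl // divn_small ?addn0.
      - by rewrite modnMDl modn_small.
      - by rewrite mulnA divnMDl.
      - by rewrite mulnA modnMDl.
    have [-> -> -> ->] := K a x Hx.
    have [-> -> -> ->] := K b y Hy.
    rewrite entry_ord Hab /= => ->.
    by rewrite !ltn_divLR // Hx Hy.
  + have Z x y : entry B1 x y = false.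
      case: (ltnP x l) => Hx; case: (ltnP y l) => Hy.
      * by rewrite (entry_ord _ (Ordinal Hx) (Ordinal Hy)) (H0 (Ordinal Hx, Ordinal Hy)).
      * by rewrite entry_out // -!leqNgt ?Hx ?Hy ?orbT.
      * by rewrite entry_out // -!leqNgt ?Hx ?Hy ?orbT.
      * by rewrite entry_out // -!leqNgt ?Hx ?Hy ?orbT.
    exists B1, (const_mx false), (const_mx false); rewrite HB.
    by apply: entry_inj => i j; rewrite !entry_kron ?Z //; lia.
- move=> [_ [A1 [A2 [A3 HA]]]]; split.
  + split; first by rewrite mulnA.
    by exists A1, (kron (p * r) A2 A3).
  + split; first by rewrite (mulnC p l).
    exists (kron (p * l) A1 A2), A3; rewrite HA; apply: entry_inj => i j.
    have E1 k : k %/ (p * r) = k %/ r %/ p by rewrite mulnC divnMA.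
    have E2 k : k %% (p * r) %/ r = k %/ r %% p by rewrite modn_divl.
    have E3 k : k %% (p * r) %% r = k %% r by rewrite modn_dvdm // dvdn_mull.
    rewrite !entry_kron; try lia.
    by rewrite !E1 !E2 !E3 andbA.
Qed.
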